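(* Let $r\geq 3$ and let $D$ be an $m$-colored semicomplete $r$-partite digraph such that every directed $4$-cycle $\overrightarrow{C}_4$ contained in $D$ (as a subdigraph) is at most $2$-colored. Let $x,y$ be distinct vertices of $D$. If there exists a directed path from $x$ to $y$ using exactly $3$ colors and there is no directed path from $y$ to $x$ using at most $3$ colors, then $d(x,y)\leq 2$.
   Context: A semicomplete $r$-partite digraph ($r\ge 2$) is a digraph whose vertex set is partitioned into $r$ nonempty independent sets (partite sets) such that for any two vertices $u,v$ in different partite sets at least one of the arcs $(u,v)$, $(v,u)$ is present (both may be present); there are no arcs inside a partite set. An $m$-colored digraph is a digraph whose arcs are each assigned one of $m$ colors. A directed path (no repeated vertices) is $j$-colored if its arcs use exactly $j$ distinct colors; it uses at most $k$ colors if it is $j$-colored for some $1\le j\le k$. A subdigraph is at most $k$-colored if its arcs use at most $k$ colors. $\overrightarrow{C}_n$ is the directed cycle of length $n$. $d(x,y)$ denotes the minimum number of arcs of a directed path from $x$ to $y$. *)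

(* Defs.v *)
From mathcomp Require Import all_boot.
Set Implicit Arguments. Unset Strict Implicit. Unset Printing Implicit Defensive.

(* An m-coloring assigns to each ordered pair a color; only the values on
   arcs are relevant, and they are required to lie in 'I_m-range (< m). *)

Definition semicomplete_multipartite (T : finType) (r : nat)
  (part : T -> 'I_r) (arc : rel T) : Prop :=
  (forall i : 'I_r, exists v : T, part v = i) /\
  (forall u v : T, part u = part v -> ~~ arc u v) /\
  (forall u v : T, part u <> part v -> arc u v || arc v u).

Definition m_coloring (T : finType) (arc : rel T) (m : nat)
  (color : T -> T -> nat) : Prop :=
  forall u v : T, arc u v -> color u v < m.

Definition walk_colors (T : finType) (color : T -> T -> nat) (x : T) (s : seq T)
  : seq nat :=
  pairmap color x s.

Definition num_colors (T : finType) (color : T -> T -> nat) (x : T) (s : seq T)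
  : nat :=
  size (undup (walk_colors color x s)).

Definition dpath (T : finType) (arc : rel T) (x y : T) (s : seq T) : bool :=
  [&& path arc x s, uniq (x :: s) & last x s == y].

Definition C4_at_most_2_colored (T : finType) (arc : rel T)
  (color : T -> T -> nat) : Prop :=
  forall a b c d : T, uniq [:: a; b; c; d] ->
    arc a b -> arc b c -> arc c d -> arc d a ->
    size (undup [:: color a b; color b c; color c d; color d a]) <= 2.

(* Main.v *)
Require Import Defs.
From mathcomp Require Import all_boot.
Set Implicit Arguments.

Lemma uniq3 {T : eqType} {p q r : T} :
  p != q -> p != r -> q != r -> uniq [:: p; q; r].
Proof. by move=> H1 H2 H3; rewrite /= !inE !negb_or H1 H2 H3. Qed.

Lemma uniq4 {T : eqType} {p q r t : T} :
  p != q -> p != r -> p != t -> q != r -> q != t -> r != t ->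
  uniq [:: p; q; r; t].
Proof. by move=> H1 H2 H3 H4 H5 H6; rewrite /= !inE !negb_or H1 H2 H3 H4 H5 H6. Qed.

Lemma uniq5 {T : eqType} {p q r t u : T} :
  p != q -> p != r -> p != t -> p != u -> q != r -> q != t -> q != u ->
  r != t -> r != u -> t != u ->
  uniq [:: p; q; r; t; u].
Proof.
by move=> H1 H2 H3 H4 H5 H6 H7 H8 H9 H10;
  rewrite /= !inE !negb_or H1 H2 H3 H4 H5 H6 H7 H8 H9 H10.
Qed.

Lemma undup_pos (c : nat) l : 0 < size (undup (c :: l)).
Proof.
have : c \in undup (c :: l) by rewrite mem_undup mem_head.
by case: (undup _).
Qed.

Lemma undup4 (p q r t u : nat) :
  size (undup [:: p; q; r; t]) <= (size (undup [:: p; q; r; u])).+1.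
Proof.
apply: (@leq_trans (size (t :: undup [:: p; q; r; u]))) => //.
apply: uniq_leq_size; first exact: undup_uniq.
move=> z; rewrite mem_undup !inE => /or4P [] /eqP ->;
  by rewrite ?mem_undup ?inE eqxx ?orbT.
Qed.

Unset Implicit Arguments.

Theorem mainTheorem3 (T : finType) (r m : nat) (part : T -> 'I_r)
  (arc : rel T) (color : T -> T -> nat) :
  3 <= r ->
  semicomplete_multipartite part arc ->
  m_coloring arc m color ->
  C4_at_most_2_colored arc color ->
  forall x y : T, x != y ->
  (exists s : seq T, dpath arc x y s /\ num_colors color x s = 3) ->
  ~ (exists s : seq T, [/\ dpath arc y x s, 1 <= num_colors color y s
                          & num_colors color y s <= 3]) ->
  exists s : seq T, dpath arc x y s /\ size s <= 2.
Proof.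
move=> _ [Hsurj [Hind Hcomp]] _ HC4 x y xy [s0 [Hs0 _]] Hforb.
have arcneq : forall u v, arc u v -> u != v.
  move=> u v huv; apply/eqP => E; move: huv; rewrite E.
  by move: (Hind v v erefl) => /negbTE ->.
have partneq : forall u v, part u != part v -> u != v.
  by move=> u v; apply: contraNneq => ->.
have [hxy|Hno1] := boolP (arc x y).
  by exists [:: y]; rewrite /dpath /= hxy !inE xy eqxx.
have [/existsP [z /andP [hxz hzy]]|/existsPn Hno2] :=
  boolP [exists z, arc x z && arc z y].
  exists [:: z; y]; split => //.
  apply/and3P; split; first by rewrite /= hxz hzy.
    exact: uniq3 (arcneq _ _ hxz) xy (arcneq _ _ hzy).
  by [].
exfalso.
have Hno2' : forall z, arc x z -> arc z y -> False.
  by move=> z h1 h2; move: (Hno2 z); rewrite h1 h2.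
have F1 : ~~ arc y x.
  apply/negP => hyx; apply: Hforb; exists [:: x]; split => //.
  by rewrite /dpath /= hyx !inE eq_sym xy eqxx.
have F2 : forall z, arc y z -> arc z x -> False.
  move=> z h1 h2; apply: Hforb; exists [:: z; x]; split.
  - apply/and3P; split; first by rewrite /= h1 h2.
      by apply: uniq3 (arcneq _ _ h1) _ (arcneq _ _ h2); rewrite eq_sym.
    by [].
  - exact: undup_pos.
  - by rewrite /num_colors /walk_colors (leq_trans (size_undup _)).
have F2' : forall z, arc y z -> arc z x -> False := F2.
have F3 : forall a b, y != a -> y != b -> a != b -> a != x -> b != x ->
    arc y a -> arc a b -> arc b x -> False.
  move=> a b h1 h2 h3 h4 h5 e1 e2 e3; apply: Hforb; exists [:: a; b; x]; split.
  - apply/and3P; split; first by rewrite /= e1 e2 e3.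
      by apply: uniq4 h1 h2 _ h3 h4 h5; rewrite eq_sym.
    by [].
  - exact: undup_pos.
  - by rewrite /num_colors /walk_colors (leq_trans (size_undup _)).
have Pxy : part x = part y.
  apply/eqP; apply/negP => /negP/eqP Hp; move: (Hcomp x y Hp).
  by rewrite (negbTE Hno1) (negbTE F1).
have Hcls : forall z, part z != part x ->
    (arc x z && arc y z) || (arc z x && arc z y).
  move=> z hz.
  have hzx : part x <> part z by apply/eqP; rewrite eq_sym.
  have hzy : part y <> part z by rewrite -Pxy.
  move: (Hcomp x z hzx) (Hcomp y z hzy).
  case hxz: (arc x z) => /=.
    case hzy': (arc z y); first by case: (Hno2' z hxz hzy').
    by rewrite orbF => _ ->.
  move=> hzx'; case hyz: (arc y z); first by case: (F2 z hyz hzx').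
  by rewrite hzx'.
have F4 : forall a w b, y != a -> y != w -> y != b -> a != w -> a != b ->
    a != x -> w != b -> w != x -> b != x ->
    arc y a -> arc a w -> arc w b -> arc b x ->
    size (undup [:: color y a; color a w; color w b; color b y]) <= 2 -> False.
  move=> a w b h1 h2 h3 h4 h5 h6 h7 h8 h9 e1 e2 e3 e4 hc.
  apply: Hforb; exists [:: a; w; b; x]; split.
  - apply/and3P; split; first by rewrite /= e1 e2 e3 e4.
      by apply: uniq5 h1 h2 h3 _ h4 h5 h6 h7 h8 h9; rewrite eq_sym.
    by [].
  - exact: undup_pos.
  - rewrite /num_colors /walk_colors /=.
    exact: leq_trans (undup4 _ _ _ _ (color b y)) _.
have pne : forall a, part a != part x -> (a != x) * (a != y) * (x != a) * (y != a).
  move=> a ha; have ax := partneq _ _ ha.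
  have ay : a != y by apply: partneq; rewrite -Pxy.
  by rewrite ax ay eq_sym ax eq_sym ay.
have key : forall n s a, size s <= n -> part a != part x -> arc x a -> arc y a ->
    path arc a s -> last a s = y -> False.
  elim=> [|n IH] [|w s] a //=.
  - by move=> _ ha _ _ _ E; move: ha; rewrite E Pxy eqxx.
  - by move=> _ ha _ _ _ E; move: ha; rewrite E Pxy eqxx.
  move=> hs ha hxa hya /andP [haw hp] hl.
  have [pw|pw] := eqVneq (part w) (part x).
    case: s hs hp hl => [|w' s] /= hs.
      by move=> _ E; apply: (Hno2' a hxa); rewrite -E.
    case/andP=> hww' hp hl.
    have pw' : part w' != part x.
      rewrite -pw; apply/eqP => E; move: hww'; by rewrite (negbTE (Hind _ _ (esym E))).
    case/orP: (Hcls w' pw') => /andP [].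
      by move=> h1 h2; apply: (IH s w') => //; rewrite -ltnS ltnW.
    move=> hw'x hw'y.
    have wx : w != x.
      by apply/eqP => E; apply: (F2 a hya); rewrite -E.
    have wy : w != y.
      by apply/eqP => E; apply: (Hno2' a hxa); rewrite -E.
    have aw : a != w by apply: partneq; rewrite pw.
    have ww' : w != w' by apply: partneq; rewrite pw eq_sym.
    have aw' : a != w'.
      by apply/eqP => E; apply: (Hno2' a hxa); rewrite E.
    have c1 := HC4 x a w w'.
    have c2 := HC4 y a w w'.
    apply: (F4 a w w') => //; try by rewrite ?(pne a ha) ?(pne w' pw') // eq_sym.
    apply: c2 => //.
    apply: uniq4 => //; by rewrite ?(pne a ha) ?(pne w' pw') // eq_sym.
  case/orP: (Hcls w pw) => /andP [].
    by move=> h1 h2; apply: (IH s w).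
  move=> hwx hwy.
  have aw : a != w.
    by apply/eqP => E; apply: (Hno2' a hxa); rewrite E.
  by apply: (F3 a w) => //; rewrite ?(pne a ha) ?(pne w pw).
case: s0 Hs0 => [|v s] /and3P [hp _ hl].
  by move: xy hl => /negbTE /= ->.
move: hp => /= /andP [hxv hp].
have pv : part v != part x.
  apply/eqP => E; move: hxv; by rewrite (negbTE (Hind _ _ (esym E))).
case/orP: (Hcls v pv) => /andP [].
  by move=> _ hyv; apply: (key (size s) s v) => //; apply/eqP.
by move=> _ hvy; apply: (Hno2' v hxv hvy).
Qed.
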